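(* Let $\Phi:[a,b]\to\mathbb{R}$ be continuous and nowhere zero and let $x_0\in[a,b]$. For $n\ge0$, a fundamental set of solutions (basis of the solution space) of the equation $D^{(n+1)}y(x)=0$ of order $n+1$ is $\mathcal S_n=\{\mathcal Y_0(x_0,x),\dots,\mathcal Y_n(x_0,x)\}$ if $n$ is odd and $\widetilde{\mathcal S}_n=\{\widetilde{\mathcal Y}_0(x_0,x),\dots,\widetilde{\mathcal Y}_n(x_0,x)\}$ if $n$ is even. Moreover, a fundamental set of solutions of $\widetilde D^{(n+1)}y(x)=0$ of order $n+1$ is $\widetilde{\mathcal S}_n$ if $n$ is odd and $\mathcal S_n$ if $n$ is even.
   Context: For $x_0,x\in[a,b]$ the $\Phi$-power functions are defined recursively by $X^{(0)}(x_0,x)\equiv 1$, $\widetilde X^{(0)}(x_0,x)\equiv 1$ and, for $n\ge 1$, $$X^{(n)}(x_0,x)=n\int_{x_0}^x X^{(n-1)}(x_0,\xi)\,\big(\Phi(\xi)\big)^{(-1)^n}\,d\xi,\qquad \widetilde X^{(n)}(x_0,x)=n\int_{x_0}^x \widetilde X^{(n-1)}(x_0,\xi)\,\Big(\frac{1}{\Phi(\xi)}\Big)^{(-1)^n}\,d\xi.$$ For $n\ge0$, $\mathcal Y_n=\widetilde X^{(n)}$ if $n$ is odd and $\mathcal Y_n=X^{(n)}$ if $n$ is even; $\widetilde{\mathcal Y}_n=X^{(n)}$ if $n$ is odd and $\widetilde{\mathcal Y}_n=\widetilde X^{(n)}$ if $n$ is even. The $\Phi$-derivatives are $Dh=\Phi\,h'$,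 $\widetilde Dh=\frac1\Phi h'$, with $D^{(0)}h=\widetilde D^{(0)}h=h$, $D^{(k)}h=D(\widetilde D^{(k-1)}h)$, $\widetilde D^{(k)}h=\widetilde D(D^{(k-1)}h)$. In this part of the paper $\Phi$ is assumed real-valued. *)

(* Defs.v *)
From Stdlib Require Import Reals.
From Coquelicot Require Import Coquelicot.
Open Scope R_scope.

Definition continuous_on_cc (a b : R) (f : R -> R) : Prop :=
  forall x, a <= x <= b ->
    filterlim f (within (fun t => a <= t <= b) (locally x)) (locally (f x)).

Definition deriv_on (a b : R) (u u' : R -> R) : Prop :=
  forall x, a <= x <= b ->
    filterlim (fun h => (u (x + h) - u x) / h)
      (within (fun h => h <> 0 /\ a <= x + h <= b) (locally 0))
      (locally (u' x)).

(* Phi-power functions X^(n)(x0,x) and Xtilde^(n)(x0,x).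
   (Phi)^((-1)^n) is 1/Phi for n odd and Phi for n even;
   (1/Phi)^((-1)^n) is Phi for n odd and 1/Phi for n even. *)
Fixpoint Xpow (Phi : R -> R) (n : nat) (x0 x : R) : R :=
  match n with
  | O => 1
  | S m => INR (S m) *
      RInt (fun xi => Xpow Phi m x0 xi *
                      (if Nat.odd (S m) then / Phi xi else Phi xi)) x0 x
  end.

Fixpoint Xtpow (Phi : R -> R) (n : nat) (x0 x : R) : R :=
  match n with
  | O => 1
  | S m => INR (S m) *
      RInt (fun xi => Xtpow Phi m x0 xi *
                      (if Nat.odd (S m) then Phi xi else / Phi xi)) x0 x
  end.

Definition Ycal (Phi : R -> R) (n : nat) (x0 x : R) : R :=
  if Nat.odd n then Xtpow Phi n x0 x else Xpow Phi n x0 x.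
Definition Ytcal (Phi : R -> R) (n : nat) (x0 x : R) : R :=
  if Nat.odd n then Xpow Phi n x0 x else Xtpow Phi n x0 x.

(* Iterated Phi-derivatives, relationally on [a,b]:
   Dk a b Phi false k y z  <->  z = D^(k) y  on [a,b]
   Dk a b Phi true  k y z  <->  z = Dtilde^(k) y on [a,b]
   (all intermediate derivatives existing on [a,b]).
   D h = Phi h', Dtilde h = h'/Phi, D^(k) = D o Dtilde^(k-1),
   Dtilde^(k) = Dtilde o D^(k-1). *)
Fixpoint Dk (a b : R) (Phi : R -> R) (t : bool) (k : nat) (y z : R -> R)
  : Prop :=
  match k with
  | O => forall x, a <= x <= b -> z x = y x
  | S m => exists u u' : R -> R,
      Dk a b Phi (negb t) m y u /\ deriv_on a b u u' /\
      forall x, a <= x <= b ->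
        z x = (if t then u' x / Phi x else Phi x * u' x)
  end.

Definition is_solution (a b : R) (Phi : R -> R) (t : bool) (k : nat)
  (y : R -> R) : Prop :=
  Dk a b Phi t k y (fun _ => 0).

Definition fundamental_set (a b : R) (Phi : R -> R) (t : bool) (n : nat)
  (f : nat -> R -> R) : Prop :=
  (forall i, (i <= n)%nat -> is_solution a b Phi t (S n) (f i)) /\
  (forall c : nat -> R,
     (forall x, a <= x <= b -> sum_f_R0 (fun i => c i * f i x) n = 0) ->
     forall i, (i <= n)%nat -> c i = 0) /\
  (forall y, is_solution a b Phi t (S n) y ->
     exists c : nat -> R,
       forall x, a <= x <= b -> y x = sum_f_R0 (fun i => c i * f i x) n).

(* Main.v *)
Require Import Defs.
From Stdlib Require Import Reals Lra Lia Factorial.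
From Coquelicot Require Import Coquelicot.
Open Scope R_scope.

Lemma ball_R (x e y : R) : ball x e y <-> Rabs (y - x) < e.
Proof. unfold ball; simpl. unfold AbsRing_ball, abs, minus, plus, opp; simpl. tauto. Qed.

Lemma within_eps (f : R -> R) (D : R -> Prop) (c l : R) :
  filterlim f (within D (locally c)) (locally l) <->
  forall eps : posreal, exists delta : posreal, forall y, D y -> Rabs (y - c) < delta ->
    Rabs (f y - l) < eps.
Proof.
  rewrite filterlim_locally. split.
  - intros H eps. destruct (H eps) as [d Hd]. exists d. intros y Dy Hy.
    apply ball_R. apply Hd; [apply ball_R; exact Hy| exact Dy].
  - intros H eps. destruct (H eps) as [d Hd]. exists d. intros y Hy Dy.
    apply ball_R. apply Hd; [exact Dy| apply ball_R; exact Hy].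
Qed.

Lemma deriv_on_eps a b u u' :
  deriv_on a b u u' <-> forall x, a <= x <= b -> forall eps : posreal,
    exists delta : posreal, forall h, h <> 0 -> a <= x + h <= b -> Rabs h < delta ->
      Rabs ((u (x+h) - u x)/h - u' x) < eps.
Proof.
  unfold deriv_on. split.
  - intros H x Hx eps. destruct (proj1 (within_eps _ _ _ _) (H x Hx) eps) as [d Hd].
    exists d. intros h H1 H2 H3. apply Hd. tauto. rewrite Rminus_0_r; exact H3.
  - intros H x Hx. apply within_eps. intros eps. destruct (H x Hx eps) as [d Hd].
    exists d. intros h [H1 H2] H3. apply Hd; auto. rewrite Rminus_0_r in H3; exact H3.
Qed.

Definition clamp a b y := Rmax a (Rmin b y).

Lemma clamp_id a b y : a <= y <= b -> clamp a b y = y.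
Proof. intros. unfold clamp, Rmax, Rmin. repeat destruct Rle_dec; lra. Qed.

Lemma clamp_in a b y : a <= b -> a <= clamp a b y <= b.
Proof. intros. unfold clamp, Rmax, Rmin. repeat destruct Rle_dec; lra. Qed.

Lemma clamp_lip a b y z : a <= b -> Rabs (clamp a b z - clamp a b y) <= Rabs (z - y).
Proof. intros. unfold clamp, Rmax, Rmin. repeat destruct Rle_dec; split_Rabs; lra. Qed.

Lemma clamp_cont a b y : a <= b ->
  filterlim (clamp a b) (locally y) (within (fun t => a <= t <= b) (locally (clamp a b y))).
Proof.
  intros Hab P HP. unfold filtermap.
  assert (Hc : filterlim (clamp a b) (locally y) (locally (clamp a b y))).
  { apply filterlim_locally. intros eps. exists eps. intros z Hz.
    apply ball_R in Hz. apply ball_R. eapply Rle_lt_trans; [apply clamp_lip; lra| exact Hz]. }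
  specialize (Hc _ HP). unfold filtermap in Hc.
  eapply filter_imp; [|exact Hc]. intros z Hz. apply Hz. apply clamp_in; lra.
Qed.

Lemma cc_ext_cont a b g y : a <= b -> continuous_on_cc a b g ->
  continuous (fun t => g (clamp a b t)) y.
Proof.
  intros Hab Hg. unfold continuous.
  eapply filterlim_comp; [apply clamp_cont; exact Hab|]. apply Hg. apply clamp_in; lra.
Qed.

Lemma cc_mult a b f g : continuous_on_cc a b f -> continuous_on_cc a b g ->
  continuous_on_cc a b (fun x => f x * g x).
Proof.
  intros Hf Hg x Hx. eapply filterlim_comp_2; [apply Hf, Hx| apply Hg, Hx|].
  apply (filterlim_mult (K:=R_AbsRing)).
Qed.

Lemma cc_inv a b f : continuous_on_cc a b f -> (forall x, a <= x <= b -> f x <> 0) ->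
  continuous_on_cc a b (fun x => / f x).
Proof.
  intros Hf Hnz x Hx. eapply filterlim_comp; [apply Hf, Hx|]. apply continuous_Rinv. auto.
Qed.

Lemma cc_const a b c : continuous_on_cc a b (fun _ => c).
Proof. intros x Hx. apply filterlim_const. Qed.

Lemma deriv_cc a b u u' : deriv_on a b u u' -> continuous_on_cc a b u.
Proof.
  intros H x Hx. apply within_eps. intros eps.
  rewrite deriv_on_eps in H. destruct (H x Hx (mkposreal 1 Rlt_0_1)) as [d Hd]. simpl in Hd.
  set (L := Rabs (u' x) + 1).
  assert (HL : 0 < L) by (unfold L; pose proof (Rabs_pos (u' x)); lra).
  assert (He : 0 < Rmin d (eps / L)).
  { apply Rmin_glb_lt. apply cond_pos. apply Rdiv_lt_0_compat; [apply cond_pos| exact HL]. }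
  exists (mkposreal _ He). simpl. intros y Hy Hyx.
  destruct (Req_dec y x) as [->|Hne].
  { rewrite Rminus_eq_0, Rabs_R0. apply cond_pos. }
  set (h := y - x). replace y with (x + h) by (unfold h; ring).
  assert (hne : h <> 0) by (unfold h; lra).
  assert (Hh1 : Rabs h < d) by (eapply Rlt_le_trans; [exact Hyx| apply Rmin_l]).
  assert (Hh2 : Rabs h < eps / L) by (eapply Rlt_le_trans; [exact Hyx| apply Rmin_r]).
  specialize (Hd h hne). replace (x + h) with y in Hd by (unfold h; ring).
  specialize (Hd Hy Hh1).
  assert (Hq : Rabs ((u y - u x) / h) < L).
  { unfold L. pose proof (Rabs_triang_inv ((u y - u x) / h) (u' x)). lra. }
  replace (u (x + h) - u x) with (h * ((u y - u x) / h))
    by (replace (x + h) with y by (unfold h; ring); field; exact hne).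
  rewrite Rabs_mult.
  apply Rle_lt_trans with (Rabs h * L).
  { apply Rmult_le_compat_l; [apply Rabs_pos| lra]. }
  apply Rlt_le_trans with (eps / L * L).
  { apply Rmult_lt_compat_r; lra. }
  right. field. lra.
Qed.
Lemma deriv_on_ext a b u u' v v' : deriv_on a b u u' ->
  (forall x, a <= x <= b -> u x = v x) -> (forall x, a <= x <= b -> u' x = v' x) ->
  deriv_on a b v v'.
Proof.
  rewrite !deriv_on_eps. intros H E1 E2 x Hx eps.
  destruct (H x Hx eps) as [d Hd]. exists d. intros h H1 H2 H3.
  rewrite <- E1, <- E1, <- E2 by auto. auto.
Qed.

Lemma FTC a b g x0 : a < b -> continuous_on_cc a b g -> a <= x0 <= b ->
  deriv_on a b (fun x => RInt g x0 x) g.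
Proof.
  intros Hab Hg Hx0.
  set (G := fun t => g (clamp a b t)).
  assert (HG : forall y, continuous G y) by (intros; apply cc_ext_cont; auto; lra).
  assert (Hd : forall x, is_derive (fun y => RInt G x0 y) x (G x)).
  { intros x. apply (is_derive_RInt G (fun y => RInt G x0 y) x0 x); [|apply HG].
    apply filter_forall. intros y. apply (RInt_correct (V:=R_CompleteNormedModule)). apply (ex_RInt_continuous (V:=R_CompleteNormedModule)).
    intros; apply HG. }
  assert (Hin : forall y, a <= y <= b -> RInt g x0 y = RInt G x0 y).
  { intros y Hy. apply (RInt_ext g G x0 y). intros t Ht. unfold G. rewrite clamp_id; auto.
    revert Ht. unfold Rmin, Rmax. repeat destruct Rle_dec; lra. }
  apply (deriv_on_ext a b (fun y => RInt G x0 y) G).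
  2: { intros; symmetry; auto. }
  2: { intros; unfold G; rewrite clamp_id; auto. }
  rewrite deriv_on_eps. intros x Hx eps.
  pose proof (proj1 (is_derive_Reals _ _ _) (Hd x) eps (cond_pos eps)) as [d Hdd].
  exists d. intros h H1 H2 H3. apply Hdd; auto.
Qed.

Lemma deriv_unique a b u v1 v2 x : a < b -> deriv_on a b u v1 -> deriv_on a b u v2 ->
  a <= x <= b -> v1 x = v2 x.
Proof.
  rewrite !deriv_on_eps. intros Hab H1 H2 Hx.
  destruct (Req_dec (v1 x) (v2 x)) as [E|Hne]; auto. exfalso.
  assert (He : 0 < Rabs (v1 x - v2 x) / 4) by (apply Rdiv_lt_0_compat; [apply Rabs_pos_lt; lra| lra]).
  destruct (H1 x Hx (mkposreal _ He)) as [d1 Hd1].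
  destruct (H2 x Hx (mkposreal _ He)) as [d2 Hd2]. simpl in *.
  set (m := Rmin d1 d2).
  assert (Hm : 0 < m) by (apply Rmin_glb_lt; apply cond_pos).
  assert (Hm1 : m <= d1) by apply Rmin_l. assert (Hm2 : m <= d2) by apply Rmin_r.
  assert (exists h, h <> 0 /\ a <= x + h <= b /\ Rabs h < m) as [h [h1 [h2 h3]]].
  { destruct (Rlt_le_dec x b).
    - exists (Rmin m (b - x) / 2).
      assert (0 < Rmin m (b-x)) by (apply Rmin_glb_lt; lra).
      pose proof (Rmin_l m (b-x)); pose proof (Rmin_r m (b-x)).
      split; [lra|split; [lra|]]. rewrite Rabs_right; lra.
    - exists (- (Rmin m (b - a) / 2)).
      assert (0 < Rmin m (b-a)) by (apply Rmin_glb_lt; lra).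
      pose proof (Rmin_l m (b-a)); pose proof (Rmin_r m (b-a)).
      split; [lra|split; [lra|]]. rewrite Rabs_left; lra. }
  specialize (Hd1 h h1 h2 ltac:(lra)). specialize (Hd2 h h1 h2 ltac:(lra)).
  revert Hd1 Hd2. set (q := (u (x + h) - u x) / h). clearbody q. intros.
  revert Hd1 Hd2. split_Rabs; lra.
Qed.

Lemma deriv_lin a b u1 u1' u2 u2' al be : deriv_on a b u1 u1' -> deriv_on a b u2 u2' ->
  deriv_on a b (fun x => al * u1 x + be * u2 x) (fun x => al * u1' x + be * u2' x).
Proof.
  intros H1 H2 x Hx.
  apply filterlim_ext with
    (f := fun h => al * ((u1 (x+h) - u1 x)/h) + be * ((u2 (x+h) - u2 x)/h)).
  { intros h. unfold Rdiv. ring. }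
  apply (filterlim_comp_2 (G:=locally (al * u1' x)) (H:=locally (be * u2' x)) (fun h => al * ((u1 (x+h) - u1 x)/h)) (fun h => be * ((u2 (x+h) - u2 x)/h)) Rplus).
  - eapply filterlim_comp; [exact (H1 x Hx)| exact (filterlim_scal_r (K:=R_AbsRing) (V:=R_NormedModule) al (u1' x))].
  - eapply filterlim_comp; [exact (H2 x Hx)| exact (filterlim_scal_r (K:=R_AbsRing) (V:=R_NormedModule) be (u2' x))].
  - exact (filterlim_plus (K:=R_AbsRing) (V:=R_NormedModule) (al * u1' x) (be * u2' x)).
Qed.

Lemma deriv_zero_const a b u u' : a < b -> deriv_on a b u u' ->
  (forall x, a <= x <= b -> u' x = 0) -> forall x, a <= x <= b -> u x = u a.
Proof.
  intros Hab Hd H0 x Hx.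
  set (U := fun t => u (clamp a b t)).
  assert (HU : forall t, a < t < b -> is_derive U t 0).
  { intros t Ht. apply is_derive_Reals. intros eps Heps.
    pose proof (proj1 (deriv_on_eps a b u u') Hd t ltac:(lra) (mkposreal eps Heps)) as [d Hdd].
    simpl in Hdd.
    assert (Hm : 0 < Rmin d (Rmin (t - a) (b - t))).
    { apply Rmin_glb_lt; [apply cond_pos| apply Rmin_glb_lt; lra]. }
    exists (mkposreal _ Hm). simpl. intros h hne hlt.
    pose proof (Rmin_l d (Rmin (t - a) (b - t))).
    pose proof (Rmin_r d (Rmin (t - a) (b - t))).
    pose proof (Rmin_l (t - a) (b - t)). pose proof (Rmin_r (t - a) (b - t)).
    assert (a <= t + h <= b) by (revert hlt; split_Rabs; lra).
    unfold U. rewrite !clamp_id by lra. rewrite <- (H0 t) by lra.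
    apply Hdd; auto. lra. }
  assert (HC : forall t, continuity_pt U t).
  { intros t. apply continuity_pt_filterlim. apply cc_ext_cont. lra. eapply deriv_cc; eauto. }
  destruct (MVT_gen U a x (fun _ => 0)) as [c [_ Hc]].
  - intros t. rewrite Rmin_left, Rmax_right by lra. intros; apply HU; lra.
  - intros; apply HC.
  - unfold U in Hc. rewrite !clamp_id in Hc by lra. lra.
Qed.

Lemma Dk_ext a b Phi k : forall t y1 z1 y2 z2,
  (forall x, a <= x <= b -> y1 x = y2 x) -> (forall x, a <= x <= b -> z1 x = z2 x) ->
  Dk a b Phi t k y1 z1 -> Dk a b Phi t k y2 z2.
Proof.
  induction k as [|m IH]; simpl; intros t y1 z1 y2 z2 Ey Ez H.
  - intros x Hx. rewrite <- Ey, <- Ez by auto. auto.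
  - destruct H as [u [u' [H1 [H2 H3]]]]. exists u, u'. split; [|split; auto].
    + eapply IH; [exact Ey| | exact H1]. auto.
    + intros x Hx. rewrite <- Ez by auto. auto.
Qed.

Lemma Dk_lin a b Phi k : forall t y1 z1 y2 z2 al be,
  Dk a b Phi t k y1 z1 -> Dk a b Phi t k y2 z2 ->
  Dk a b Phi t k (fun x => al * y1 x + be * y2 x) (fun x => al * z1 x + be * z2 x).
Proof.
  induction k as [|m IH]; simpl; intros t y1 z1 y2 z2 al be H1 H2.
  - intros x Hx. rewrite H1, H2 by auto. auto.
  - destruct H1 as [u1 [u1' [A1 [B1 C1]]]]. destruct H2 as [u2 [u2' [A2 [B2 C2]]]].
    exists (fun x => al * u1 x + be * u2 x), (fun x => al * u1' x + be * u2' x).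
    split; [apply IH; auto| split; [apply deriv_lin; auto|]].
    intros x Hx. rewrite C1, C2 by auto. destruct t; unfold Rdiv; ring.
Qed.

Lemma Dk_unique a b Phi k : a < b -> forall t y z1 z2,
  Dk a b Phi t k y z1 -> Dk a b Phi t k y z2 -> forall x, a <= x <= b -> z1 x = z2 x.
Proof.
  intros Hab. induction k as [|m IH]; simpl; intros t y z1 z2 H1 H2 x Hx.
  - rewrite H1, H2; auto.
  - destruct H1 as [u1 [u1' [A1 [B1 C1]]]]. destruct H2 as [u2 [u2' [A2 [B2 C2]]]].
    rewrite C1, C2 by auto.
    assert (E : u1' x = u2' x).
    { apply (deriv_unique a b u1); auto.
      apply (deriv_on_ext a b u2 u2'); auto. intros; symmetry; eapply IH; eauto. }
    rewrite E; auto.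
Qed.

Lemma Dk_const a b Phi m : forall t c y, (forall x, a <= x <= b -> y x = c) ->
  Dk a b Phi t (S m) y (fun _ => 0).
Proof.
  induction m as [|m IH]; intros t c y Hy.
  - simpl. exists y, (fun _ => 0). split; [intros; auto| split].
    + apply (deriv_on_ext a b (fun _ => c) (fun _ => 0)).
      * rewrite deriv_on_eps. intros x Hx eps. exists eps. intros h _ _ _.
        match goal with |- Rabs ?e < _ => replace e with 0 by (unfold Rdiv; ring) end; rewrite Rabs_R0; apply cond_pos.
      * intros; symmetry; auto.
      * auto.
    + intros. destruct t; unfold Rdiv; ring.
  - exists (fun _ => 0), (fun _ => 0). split; [apply (IH _ c); auto| split].
    + rewrite deriv_on_eps. intros x Hx eps. exists eps. intros h _ _ _.
      match goal with |- Rabs ?e < _ => replace e with 0 by (unfold Rdiv; ring) end; rewrite Rabs_R0; apply cond_pos.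
    + intros. destruct t; unfold Rdiv; ring.
Qed.

Lemma odd_S n : Nat.odd (S n) = negb (Nat.odd n).
Proof. rewrite Nat.odd_succ, <- Nat.negb_odd. reflexivity. Qed.

Definition inner (t : bool) (k : nat) := xorb t (negb (Nat.odd k)).

Lemma inner_SS t m : inner t (S (S m)) = inner (negb t) (S m).
Proof. unfold inner. rewrite !odd_S. destruct t, (Nat.odd m); reflexivity. Qed.

Lemma inner_S t m : inner t (S m) = negb (inner t m).
Proof. unfold inner. rewrite !odd_S. destruct t, (Nat.odd m); reflexivity. Qed.

Definition P Phi x0 (s : bool) i x := if s then Ycal Phi i x0 x else Ytcal Phi i x0 x.

Lemma P_0 Phi x0 s x : P Phi x0 s 0 x = 1.
Proof. destruct s; reflexivity. Qed.

Lemma Xpow_S Phi j x0 x : Xpow Phi (S j) x0 x = INR (S j) *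
      RInt (fun xi => Xpow Phi j x0 xi *
                      (if Nat.odd (S j) then / Phi xi else Phi xi)) x0 x.
Proof. reflexivity. Qed.
Lemma Xtpow_S Phi j x0 x : Xtpow Phi (S j) x0 x = INR (S j) *
      RInt (fun xi => Xtpow Phi j x0 xi *
                      (if Nat.odd (S j) then Phi xi else / Phi xi)) x0 x.
Proof. reflexivity. Qed.

Lemma P_S Phi x0 s j x : P Phi x0 s (S j) x = INR (S j) *
  RInt (fun xi => P Phi x0 (negb s) j xi * (if s then Phi xi else / Phi xi)) x0 x.
Proof.
  unfold P, Ycal, Ytcal. rewrite Xpow_S, Xtpow_S. rewrite !odd_S.
  destruct s, (Nat.odd j); reflexivity.
Qed.

Section Main.
Variables (a b : R) (Phi : R -> R) (x0 : R).
Hypothesis hab : a < b.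
Hypothesis hcont : continuous_on_cc a b Phi.
Hypothesis hnz : forall x, a <= x <= b -> Phi x <> 0.
Hypothesis hx0 : a <= x0 <= b.

Lemma Pderiv i : forall s, continuous_on_cc a b (P Phi x0 s i) /\
  deriv_on a b (P Phi x0 s (S i))
    (fun x => INR (S i) * (P Phi x0 (negb s) i x * (if s then Phi x else / Phi x))).
Proof.
  induction i as [|j IH]; intros s.
  - assert (Hc : forall s', continuous_on_cc a b (P Phi x0 s' 0)).
    { intros s' y Hy. eapply filterlim_ext; [intros z; symmetry; apply P_0|].
      rewrite P_0. apply filterlim_const. }
    split; [apply Hc|].
    set (g := fun xi => P Phi x0 (negb s) 0 xi * (if s then Phi xi else / Phi xi)).
    assert (Hg : continuous_on_cc a b g).
    { apply cc_mult; [apply Hc|]. destruct s; [exact hcont| apply cc_inv; auto]. }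
    pose proof (FTC a b g x0 hab Hg hx0) as HF.
    eapply deriv_on_ext; [apply (deriv_lin _ _ _ _ _ _ (INR 1) 0 HF HF)| |].
    + intros x Hx. rewrite P_S. fold g. ring.
    + intros x Hx. unfold g. ring.
  - assert (Hc : forall s', continuous_on_cc a b (P Phi x0 s' (S j))).
    { intros s'. eapply deriv_cc. apply (IH s'). }
    split; [apply Hc|].
    set (g := fun xi => P Phi x0 (negb s) (S j) xi * (if s then Phi xi else / Phi xi)).
    assert (Hg : continuous_on_cc a b g).
    { apply cc_mult; [apply Hc|]. destruct s; [exact hcont| apply cc_inv; auto]. }
    pose proof (FTC a b g x0 hab Hg hx0) as HF.
    eapply deriv_on_ext; [apply (deriv_lin _ _ _ _ _ _ (INR (S (S j))) 0 HF HF)| |].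
    + intros x Hx. rewrite P_S. fold g. ring.
    + intros x Hx. unfold g. ring.
Qed.

Lemma IP m : forall t y y' z s, s = inner t (S m) -> deriv_on a b y y' ->
  Dk a b Phi t m (fun x => if s then y' x / Phi x else Phi x * y' x) z ->
  Dk a b Phi t (S m) y z.
Proof.
  induction m as [|m IH]; intros t y y' z s Hs Hd H.
  - exists y, y'. split; [simpl; intros; reflexivity| split; auto].
    intros x Hx. rewrite H by auto. subst s. unfold inner. destruct t; reflexivity.
  - destruct H as [u [u' [A [B C]]]]. exists u, u'. split; [|split; auto].
    apply (IH (negb t) y y' u s); auto. rewrite Hs. apply inner_SS.
Qed.

Lemma LA i : forall s k t, (i <= k)%nat -> inner t k = s ->
  Dk a b Phi t k (P Phi x0 s i) (fun _ => if Nat.eqb i k then INR (fact i) else 0).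
Proof.
  induction i as [|j IH]; intros s k t Hik Hs.
  - destruct k as [|m].
    + intros x Hx. rewrite P_0. reflexivity.
    + eapply Dk_ext; [| |apply (Dk_const a b Phi m t 1 (P Phi x0 s 0))].
      * intros; reflexivity.
      * intros; reflexivity.
      * intros; apply P_0.
  - destruct k as [|m]; [lia|].
    apply (IP m t _ _ _ s (eq_sym Hs) (proj2 (Pderiv j s))).
    assert (Hs' : inner t m = negb s) by (rewrite <- Hs, inner_S, Bool.negb_involutive; reflexivity).
    pose proof (IH (negb s) m t ltac:(lia) Hs') as H.
    eapply Dk_ext; [| | apply (Dk_lin a b Phi m t _ _ _ _ (INR (S j)) 0 H H)].
    + intros x Hx. pose proof (hnz x Hx). destruct s; field; auto.
    + intros x Hx. change (S j =? S m) with (j =? m). destruct (j =? m).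
      * change (fact (S j)) with (S j * fact j)%nat. rewrite mult_INR. ring.
      * ring.
Qed.

Lemma Dk_sum t k n : forall (f g : nat -> R -> R) (c : nat -> R),
  (forall i, (i <= n)%nat -> Dk a b Phi t k (f i) (g i)) ->
  Dk a b Phi t k (fun x => sum_f_R0 (fun i => c i * f i x) n)
                 (fun x => sum_f_R0 (fun i => c i * g i x) n).
Proof.
  induction n as [|m IH]; intros f g c H.
  - simpl. eapply Dk_ext; [| | apply (Dk_lin a b Phi k t _ _ _ _ (c 0%nat) 0 (H 0%nat (le_n 0)) (H 0%nat (le_n 0)))];
      intros; simpl; ring.
  - simpl. eapply Dk_ext; [| | apply (Dk_lin a b Phi k t _ _ _ _ 1 (c (S m)) (IH f g c ltac:(intros; apply H; lia)) (H (S m) (le_n _)))];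
      intros; simpl; ring.
Qed.

Lemma indep n : forall s c, (forall x, a <= x <= b -> sum_f_R0 (fun i => c i * P Phi x0 s i x) n = 0) ->
  forall i, (i <= n)%nat -> c i = 0.
Proof.
  induction n as [|m IH]; intros s c H i Hi.
  - assert (i = 0%nat) by lia. subst. specialize (H a ltac:(lra)). simpl in H.
    rewrite P_0 in H. lra.
  - set (t := xorb s (Nat.odd m)).
    assert (Ht : inner t (S m) = s).
    { unfold t, inner. rewrite odd_S. destruct s, (Nat.odd m); reflexivity. }
    pose proof (Dk_sum t (S m) (S m) (P Phi x0 s)
      (fun i _ => if Nat.eqb i (S m) then INR (fact i) else 0) c
      ltac:(intros; apply LA; auto)) as HA.
    pose proof (Dk_const a b Phi m t 0 _ H) as H0.
    pose proof (Dk_unique a b Phi (S m) hab t _ _ _ HA H0 a ltac:(lra)) as E.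
    simpl in E.
    rewrite (sum_eq _ (fun _ => 0)) in E.
    2: { intros j Hj. rewrite (proj2 (Nat.eqb_neq j (S m))) by lia. ring. }
    rewrite sum_cte, Nat.eqb_refl in E. change (INR (fact m + m * fact m)) with (INR (fact (S m))) in E.
    assert (Hc : c (S m) = 0).
    { pose proof (INR_fact_neq_0 (S m)).
      destruct (Rmult_integral (c (S m)) (INR (fact (S m)))); auto; [lra| contradiction]. }
    destruct (Nat.eq_dec i (S m)) as [->|Hne]; auto.
    apply (IH s); [|lia]. intros x Hx. specialize (H x Hx). simpl in H.
    rewrite Hc in H. lra.
Qed.

Lemma span n : forall t y, Dk a b Phi t (S n) y (fun _ => 0) ->
  exists c : nat -> R, forall x, a <= x <= b ->
    y x = sum_f_R0 (fun i => c i * P Phi x0 (inner t (S n)) i x) n.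
Proof.
  induction n as [|m IH]; intros t y H; destruct H as [u [u' [A [B C]]]];
  (assert (Hu' : forall x, a <= x <= b -> u' x = 0);
   [ intros x Hx; specialize (C x Hx); pose proof (hnz x Hx);
     destruct t; [ unfold Rdiv in C; symmetry in C; apply Rmult_integral in C;
       destruct C as [C|C]; auto; exfalso; apply (Rinv_neq_0_compat (Phi x)); auto
     | symmetry in C; apply Rmult_integral in C; destruct C; auto; contradiction ] |]);
  pose proof (deriv_zero_const a b u u' hab B Hu') as Hk.
  - exists (fun _ => u a). intros x Hx. simpl. rewrite P_0. simpl in A.
    rewrite <- A, Hk by auto. ring.
  - set (s := inner t (S (S m))).
    assert (Hs : inner (negb t) (S m) = s) by (unfold s; rewrite inner_SS; reflexivity).
    pose proof (LA (S m) s (S m) (negb t) (le_n _) Hs) as HP.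
    rewrite Nat.eqb_refl in HP.
    set (be := - u a / INR (fact (S m))).
    assert (A' : Dk a b Phi (negb t) (S m) y (fun _ => u a)).
    { eapply Dk_ext; [| | exact A]; auto. }
    pose proof (Dk_lin a b Phi (S m) (negb t) _ _ _ _ 1 be A' HP) as HW.
    assert (HW' : Dk a b Phi (negb t) (S m) (fun x => 1 * y x + be * P Phi x0 s (S m) x) (fun _ => 0)).
    { eapply Dk_ext; [| | exact HW]; auto. intros. unfold be. field. apply INR_fact_neq_0. }
    destruct (IH (negb t) _ HW') as [c Hc].
    rewrite Hs in Hc.
    exists (fun i => if Nat.eqb i (S m) then - be else c i).
    intros x Hx. simpl. rewrite Nat.eqb_refl.
    rewrite (sum_eq _ (fun i => c i * P Phi x0 s i x)).
    2: { intros j Hj. rewrite (proj2 (Nat.eqb_neq j (S m))) by lia. reflexivity. }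
    rewrite <- Hc by auto. ring.
Qed.

Lemma fundamental t n : fundamental_set a b Phi t n (fun i x => P Phi x0 (inner t (S n)) i x).
Proof.
  split; [|split].
  - intros i Hi. unfold is_solution.
    eapply Dk_ext; [| | apply (LA i (inner t (S n)) (S n) t ltac:(lia) eq_refl)]; auto.
    intros. rewrite (proj2 (Nat.eqb_neq i (S n))) by lia. reflexivity.
  - intros c H. apply (indep n _ c H).
  - intros y H. apply (span n t y H).
Qed.

End Main.

Theorem proposition3 (a b : R) (Phi : R -> R) (x0 : R)
  (hab : a < b)
  (hcont : continuous_on_cc a b Phi)
  (hnz : forall x, a <= x <= b -> Phi x <> 0)
  (hx0 : a <= x0 <= b) (n : nat) :
  fundamental_set a b Phi false n
    (fun i x => if Nat.odd n then Ycal Phi i x0 x else Ytcal Phi i x0 x) /\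
  fundamental_set a b Phi true n
    (fun i x => if Nat.odd n then Ytcal Phi i x0 x else Ycal Phi i x0 x).
Proof.
  pose proof (fundamental a b Phi x0 hab hcont hnz hx0 false n) as H1.
  pose proof (fundamental a b Phi x0 hab hcont hnz hx0 true n) as H2.
  unfold inner, P in H1, H2. rewrite odd_S in H1, H2.
  revert H1 H2. destruct (Nat.odd n); simpl; intros H1 H2; split; assumption.
Qed.
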